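(* For every $\varepsilon>0$ there exists a two-player protocol for the problem Max-Card-$k$ (in the two-player model described in the context) with an approximation guarantee of $\frac{2}{3}-\varepsilon$ whose communication complexity is $\widetilde{O}(k/\varepsilon)$ elements. Moreover, there exists such a protocol achieving an approximation guarantee of $\frac{2}{3}$ whose communication complexity is $O(k^2)$ elements.
   Context: Two-player model for Max-Card-$k$. The global information known to both players consists of a positive integer $k$, a finite ground set $W$, and a partition $W=W_A\,\dot\cup\, W_B$. Alice privately receives a set $V_A\subseteq W_A$ and Bob privately receives a set $V_B\subseteq W_B$. There is a non-negative, monotone, submodular function $f:2^W\to\mathbb{R}_{\ge 0}$; Alice can query $f$ (via a value oracle) only on subsets of $W_A$, while Bob can query $f$ on any subset of $W$. A protocol consists of two possibly randomized algorithms: Alice's algorithm computes a message $m$ from the global information, $V_A$ and her oracle; then Bob's algorithm computes an output set $S\subseteq V_A\cup V_B$ with $|S|\le k$ from the global information, $V_B$, $m$ and his oracle. The communication complexity is the maximum length of $m$ over all inputs and the randomness; when the message consists of elements of $W$, it is measured in elements (number of elements of $W$ in $m$). The protocol has approximation guarantee $\rho$ if for every instance $\mathbb{E}[f(S)]\ge \rho\cdot\max\{f(T): T\subseteq V_A\cup V_B,\ |T|\le k\}$. A monotone submodular $f$ means $f(X)\le f(Y)$ for $X\subseteq Y$ and $f(X\cup\{v\})-f(X)\ge f(Y\cup\{v\})-f(Y)$ for $X\subseteq Y\subseteq W$, $v\notin Y$. $\widetilde{O}$ suppresses poly-logarithmic factors. No bound on computation time is required. *)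

(* Defs.v *)
From HB Require Import structures.
From mathcomp Require Import all_boot all_order all_algebra.
From mathcomp Require Import all_classical all_reals.
From mathcomp Require Import exp.
From Stdlib Require List.
Set Implicit Arguments. Unset Strict Implicit. Unset Printing Implicit Defensive.
Import Order.TTheory GRing.Theory Num.Theory.
Local Open Scope ring_scope.

(* Ground set W = 'I_n (any finite set up to relabelling).  The partition is
   W_A = WA, W_B = ~: WA.  A set function is f : {set 'I_n} -> R. *)

Section Defs.
Variable R : realType.

Definition monotone_sf n (f : {set 'I_n} -> R) : Prop :=
  forall X Y : {set 'I_n}, X \subset Y -> f X <= f Y.

Definition submodular_sf n (f : {set 'I_n} -> R) : Prop :=
  forall (X Y : {set 'I_n}) (v : 'I_n), X \subset Y -> v \notin Y ->
    f (v |: X) - f X >= f (v |: Y) - f Y.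

Definition nonneg_sf n (f : {set 'I_n} -> R) : Prop := forall X, 0 <= f X.

(* A finitely supported probability distribution on X: a list of
   (probability, outcome) pairs with nonnegative weights summing to 1. *)
Definition is_dist (X : Type) (d : seq (R * X)) : Prop :=
  (forall p, List.In p d -> 0 <= p.1) /\ \sum_(p <- d) p.1 = 1.

Definition expect (X : Type) (d : seq (R * X)) (g : X -> R) : R :=
  \sum_(p <- d) p.1 * g p.2.

(* Global information:
   k, n (ground set 'I_n), WA (W_A; W_B = ~: WA).
   Alice gets V_A and the value oracle restricted to subsets of W_A,
   modelled as the function X |-> f (X :&: W_A) (which carries exactly the
   values of f on subsets of W_A); she outputs a distribution over messages,
   a message being a sequence of elements of W.
   Bob gets V_B, the message, and the full oracle f; he outputs a
   distribution over sets S. *)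
Record protocol := Protocol {
  alice : forall (k n : nat) (WA VA : {set 'I_n}) (fA : {set 'I_n} -> R),
            seq (R * seq 'I_n);
  bob : forall (k n : nat) (WA VB : {set 'I_n}) (m : seq 'I_n)
          (f : {set 'I_n} -> R), seq (R * {set 'I_n})
}.

Definition restrict n (WA : {set 'I_n}) (f : {set 'I_n} -> R) : {set 'I_n} -> R :=
  fun X => f (X :&: WA).

Definition valid_instance (k n : nat) (WA VA VB : {set 'I_n})
  (f : {set 'I_n} -> R) : Prop :=
  (0 < k)%N /\ VA \subset WA /\ VB \subset ~: WA /\
  nonneg_sf f /\ monotone_sf f /\ submodular_sf f.

Definition alice_dist (P : protocol) k n (WA VA : {set 'I_n}) f :=
  alice P k WA VA (restrict WA f).

(* Optimum: max { f T : T \subseteq V_A \cup V_B, |T| <= k } (f >= 0, so 0 is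
   a harmless identity for max; T = set0 is always feasible). *)
Definition opt_val k n (VA VB : {set 'I_n}) (f : {set 'I_n} -> R) : R :=
  \big[Num.max/0]_(T : {set 'I_n} | (T \subset VA :|: VB) && (#|T| <= k)%N) f T.

Definition protocol_value (P : protocol) k n (WA VA VB : {set 'I_n}) f : R :=
  expect (alice_dist P k WA VA f)
         (fun m => expect (bob P k WA VB m f) f).

Definition protocol_wf (P : protocol) k n (WA VA VB : {set 'I_n}) f : Prop :=
  is_dist (alice_dist P k WA VA f) /\
  forall pm, List.In pm (alice_dist P k WA VA f) ->
    is_dist (bob P k WA VB pm.2 f) /\
    forall pS, List.In pS (bob P k WA VB pm.2 f) ->
      pS.2 \subset VA :|: VB /\ (#|pS.2| <= k)%N.

Definition approx_protocol (P : protocol) (rho : R) : Prop :=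
  forall k n (WA VA VB : {set 'I_n}) f, valid_instance k WA VA VB f ->
    protocol_wf P k WA VA VB f /\
    protocol_value P k WA VA VB f >= rho * opt_val k VA VB f.

Definition comm_bounded (P : protocol) (bound : nat -> R) : Prop :=
  forall k n (WA VA VB : {set 'I_n}) f, valid_instance k WA VA VB f ->
    forall pm, List.In pm (alice_dist P k WA VA f) ->
      (size pm.2)%:R <= bound k.

End Defs.

(* Main.v *)
Require Import Defs.
From mathcomp Require Import all_boot all_order all_algebra.
From mathcomp Require Import reals.
From mathcomp Require Import ring lra zify.

Set Implicit Arguments. Unset Strict Implicit. Unset Printing Implicit Defensive.
Import Order.TTheory GRing.Theory Num.Theory.
Local Open Scope ring_scope.

Lemma gen_sub (R : realType) n (f : {set 'I_n} -> R) :
  monotone_sf f -> submodular_sf f ->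
  forall (s : seq 'I_n) (X Y : {set 'I_n}), X \subset Y ->
  f (Y :|: [set:: s]) - f Y <= f (X :|: [set:: s]) - f X.
Proof.
move=> mon sub; elim=> [|z s IH] X Y XY.
  by rewrite set_nil !setU0 !subrr.
rewrite set_cons.
set S := [set:: s].
have e1 : Y :|: (z |: S) = z |: (Y :|: S) by rewrite setUCA.
have e2 : X :|: (z |: S) = z |: (X :|: S) by rewrite setUCA.
rewrite e1 e2.
have IH' := IH X Y XY.
suff : f (z |: (Y :|: S)) - f (Y :|: S) <= f (z |: (X :|: S)) - f (X :|: S) by lra.
case zin : (z \in Y :|: S).
  have -> : z |: (Y :|: S) = Y :|: S.
    by apply/setUidPr; rewrite sub1set zin.
  rewrite subrr subr_ge0; apply: mon; exact: subsetUr.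
apply: sub; last by rewrite zin.
by apply: setSU.
Qed.

Lemma lat (R : realType) n (f : {set 'I_n} -> R) :
  monotone_sf f -> submodular_sf f ->
  forall A B : {set 'I_n}, f (A :|: B) + f (A :&: B) <= f A + f B.
Proof.
move=> mon sub A B.
have := gen_sub mon sub (enum B) (subsetIl A B).
rewrite set_enum.
have -> : A :&: B :|: B = B.
  by apply/setP => x; rewrite !inE; case: (x \in A); case: (x \in B).
lra.
Qed.

Lemma sum_marg (R : realType) n (f : {set 'I_n} -> R) :
  submodular_sf f -> forall (X : {set 'I_n}) (s : seq 'I_n), uniq s -> {subset s <= X} ->
  \sum_(y <- s) (f X - f (X :\ y)) <= f X - f (X :\: [set:: s]).
Proof.
move=> sub X; elim=> [|y s IH] /=.
  by rewrite big_nil set_nil setD0 subrr.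
move=> /andP[ys us] sX.
have yX : y \in X by apply: sX; rewrite mem_head.
have sX' : {subset s <= X} by move=> z zs; apply: sX; rewrite inE zs orbT.
rewrite big_cons set_cons.
have IH' := IH us sX'.
set S := [set:: s].
have e : X :\: (y |: S) = (X :\: S) :\ y.
  by apply/setP => z; rewrite !inE; case: (z == y); case: (z \in S); case: (z \in X).
rewrite e.
suff : f X - f (X :\ y) <= f (X :\: S) - f ((X :\: S) :\ y) by lra.
have yXS : y \in X :\: S by rewrite /S !inE yX ys.
have h := sub ((X :\: S) :\ y) (X :\ y) y.
rewrite !setD1K // in h; apply: h.
  by apply/subsetP => z; rewrite !inE => /andP[-> /andP[_ ->]].
by rewrite setD11.
Qed.

Lemma step_rm (R : realType) n (f : {set 'I_n} -> R) :
  nonneg_sf f -> submodular_sf f -> forall X : {set 'I_n}, (0 < #|X|)%N ->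
  exists2 x, x \in X & (#|X|.-1)%:R * f X <= #|X|%:R * f (X :\ x).
Proof.
move=> nn sub X /card_gt0P [x0 x0X].
pose g y := f X - f (X :\ y).
case: (@arg_minP _ _ _ x0 (mem X) g x0X) => x xX minx.
exists x => //.
have sE : {subset enum X <= X} by move=> z; rewrite mem_enum.
have h := sum_marg sub (enum_uniq (mem X)) sE.
rewrite set_enum setDv in h.
have h2 : \sum_(y in X) g x <= \sum_(y in X) g y.
  by apply: ler_sum => y yX; apply: minx.
rewrite sumr_const in h2.
rewrite big_enum /= in h.
have f0 := nn set0.
have hX : (#|X|%:R : R) = (#|X|.-1)%:R + 1.
  by rewrite natr1 prednK //; apply/card_gt0P; exists x0.
rewrite -mulr_natl /g in h2.
rewrite hX in h2 *.
nra.
Qed.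

Lemma trim (R : realType) n (f : {set 'I_n} -> R) :
  nonneg_sf f -> submodular_sf f -> forall (t m : nat) (X : {set 'I_n}), #|X| = (t + m)%N ->
  exists X' : {set 'I_n}, [/\ X' \subset X, #|X'| = t & t%:R * f X <= #|X|%:R * f X'].
Proof.
move=> nn sub t; elim=> [|m IH] X cX.
  by exists X; split => //; rewrite cX addn0.
have [x xX hx] := step_rm nn sub (ltac:(rewrite cX; lia) : (0 < #|X|)%N).
have cXx : #|X :\ x| = (t + m)%N by move: cX; rewrite (cardsD1 x X) xX; lia.
have [X' [sX' cX' hX']] := IH _ cXx.
exists X'; split => //.
  by apply: subset_trans sX' (subD1set _ _).
have eN : #|X| = (t + m).+1 by lia.
rewrite eN /= in hx *; rewrite cXx in hX'.
have w0 := nn X'.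
case: (posnP (t + m)) => [t0|tpos].
  have -> : t = 0%N by lia.
  by rewrite mul0r mulr_ge0.
have tp : (0 : R) < (t + m)%:R by rewrite ltr0n.
rewrite -natr1 in hx *.
have t0 : (0 : R) <= t%:R by [].
set a := (t%:R : R) in t0 hX' *; set b := ((t + m)%:R : R) in tp hX' hx *.
nra.
Qed.

Lemma trim_to (R : realType) n (f : {set 'I_n} -> R) :
  nonneg_sf f -> submodular_sf f -> forall (k d : nat) (X : {set 'I_n}), (#|X| <= k + d)%N ->
  exists X' : {set 'I_n}, [/\ X' \subset X, (#|X'| <= k)%N & k%:R * f X <= (k + d)%:R * f X'].
Proof.
move=> nn sub k d X cX.
have f0 := nn X.
case: (leqP #|X| k) => hk.
  exists X; split => //.
  by apply: ler_wpM2r => //; rewrite ler_nat leq_addr.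
have [X' [sX' cX' hX']] := trim nn sub (ltac:(rewrite (subnKC (ltnW hk)); reflexivity) : #|X| = (k + (#|X| - k))%N).
exists X'; split => //; first by rewrite cX'.
apply: le_trans hX' _.
by apply: ler_wpM2r => //; rewrite ler_nat.
Qed.

Definition best1 (R : realType) n (VA : {set 'I_n}) (fA : {set 'I_n} -> R) (a : nat)
  : {set 'I_n} :=
  [arg max_(S > set0 | (S \subset VA) && (#|S| <= a)%N) fA S]%O.

Definition best2 (R : realType) n (VA : {set 'I_n}) (fA : {set 'I_n} -> R) (a : nat)
  : {set 'I_n} :=
  [arg max_(S > set0 | (S \subset VA) && (#|S| <= a)%N) fA (best1 VA fA a :|: S)]%O.

Definition grid (s k : nat) : seq nat := [seq minn (j * s) k | j <- iota 0 (k %/ s).+2].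

Definition amsg (R : realType) (s k : nat) n (VA : {set 'I_n}) (fA : {set 'I_n} -> R)
  : seq 'I_n :=
  flatten [seq enum (best1 VA fA a) ++ enum (best2 VA fA a) | a <- grid s k].

Definition bobout (R : realType) (k : nat) n (VB : {set 'I_n}) (m : seq 'I_n)
  (f : {set 'I_n} -> R) : {set 'I_n} :=
  [arg max_(T > set0 | (T \subset [set x in m] :|: VB) && (#|T| <= k)%N) f T]%O.

Definition proto (R : realType) (sf : nat -> nat) : protocol R :=
  Protocol (fun k n WA VA fA => [:: (1, amsg (sf k) k VA fA)])
           (fun k n WA VB m f => [:: (1, bobout k VB m f)]).

Lemma best1P (R : realType) n (VA : {set 'I_n}) (fA : {set 'I_n} -> R) a :
  [/\ best1 VA fA a \subset VA, (#|best1 VA fA a| <= a)%N &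
   forall T : {set 'I_n}, T \subset VA -> (#|T| <= a)%N -> fA T <= fA (best1 VA fA a)].
Proof.
rewrite /best1; case: arg_maxP; first by rewrite sub0set cards0.
move=> S /andP[h1 h2] h3; split => // T hT hT'; apply: h3; by rewrite hT hT'.
Qed.

Lemma best2P (R : realType) n (VA : {set 'I_n}) (fA : {set 'I_n} -> R) a :
  [/\ best2 VA fA a \subset VA, (#|best2 VA fA a| <= a)%N &
   forall T : {set 'I_n}, T \subset VA -> (#|T| <= a)%N ->
     fA (best1 VA fA a :|: T) <= fA (best1 VA fA a :|: best2 VA fA a)].
Proof.
rewrite /best2; case: arg_maxP; first by rewrite sub0set cards0.
move=> S /andP[h1 h2] h3; split => // T hT hT'; apply: h3; by rewrite hT hT'.
Qed.

Lemma boboutP (R : realType) k n (VB : {set 'I_n}) m (f : {set 'I_n} -> R) :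
  [/\ bobout k VB m f \subset [set x in m] :|: VB, (#|bobout k VB m f| <= k)%N &
   forall T : {set 'I_n}, T \subset [set x in m] :|: VB -> (#|T| <= k)%N -> f T <= f (bobout k VB m f)].
Proof.
rewrite /bobout; case: arg_maxP; first by rewrite sub0set cards0.
move=> S /andP[h1 h2] h3; split => // T hT hT'; apply: h3; by rewrite hT hT'.
Qed.

Lemma size_amsg (R : realType) s k n (VA : {set 'I_n}) (fA : {set 'I_n} -> R) :
  (size (amsg s k VA fA) <= 2 * k * (k %/ s).+2)%N.
Proof.
rewrite /amsg.
have : all (fun a => a <= k)%N (grid s k).
  by apply/allP => a /mapP[j _ ->]; apply: geq_minr.
have -> : (k %/ s).+2 = size (grid s k) by rewrite size_map size_iota.
elim: (grid s k) => [|a l IH] //= /andP[ak al].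
rewrite size_cat size_cat -!cardE.
have [_ c1 _] := best1P VA fA a.
have [_ c2 _] := best2P VA fA a.
move: (IH al) => h; rewrite mulnS; apply: leq_add h.
apply: leq_trans (leq_add c1 c2) _; by rewrite addnn mul2n leq_double.
Qed.

Lemma grid_cover s k a : (0 < s)%N -> (a <= k)%N ->
  exists2 a', a' \in grid s k & [/\ (a <= a')%N, (a' <= a + s.-1)%N & (a' <= k)%N].
Proof.
move=> s0 ak.
set j := ((a + s.-1) %/ s)%N.
have h1 : (j * s <= a + s.-1)%N by apply: leq_trunc_div.
have h2 : (a + s.-1 < j * s + s)%N.
  by rewrite /j {1}(divn_eq (a + s.-1) s) ltn_add2l ltn_mod.
have h3 : (j < (k %/ s).+2)%N.
  rewrite -(ltn_pmul2r s0).
  have hk := divn_eq k s. have hm := ltn_mod k s. rewrite s0 in hm.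
  move: hk hm h1; rewrite !mulSn.
  set q := (k %/ s * s)%N; set r := (k %% s)%N; set js := (j * s)%N.
  move=> hk hm h1; lia.
exists (minn (j * s) k).
  apply/mapP; exists j => //; by rewrite mem_iota add0n leq0n h3.
split; [| |exact: geq_minr].
- rewrite leq_min ak andbT; lia.
- apply: leq_trans (geq_minl _ _) h1.
Qed.

Lemma key (R : realType) n (f : {set 'I_n} -> R) :
  nonneg_sf f -> monotone_sf f -> submodular_sf f ->
  forall A B S1 S2 : {set 'I_n}, f A <= f S1 -> f (S1 :|: A) <= f (S1 :|: S2) ->
  2 * f (A :|: B) <= 2 * f (S1 :|: B) + f (S2 :|: B).
Proof.
move=> nn mon sub A B S1 S2 h1 h2.
have L1 := lat mon sub (S1 :|: B) (S2 :|: B).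
have L2 := lat mon sub (S1 :|: B) (S1 :|: A).
have L3 := lat mon sub A B.
have m1 : f (S1 :|: S2) <= f ((S1 :|: B) :|: (S2 :|: B)).
  apply: mon; apply/subsetP => x; rewrite !inE.
  by case: (x \in S1); case: (x \in S2); case: (x \in B).
have m2 : f B <= f ((S1 :|: B) :&: (S2 :|: B)).
  apply: mon; apply/subsetP => x; rewrite !inE.
  by case: (x \in S1); case: (x \in S2); case: (x \in B).
have m3 : f (A :|: B) <= f ((S1 :|: B) :|: (S1 :|: A)).
  apply: mon; apply/subsetP => x; rewrite !inE.
  by case: (x \in S1); case: (x \in A); case: (x \in B).
have m4 : f S1 <= f ((S1 :|: B) :&: (S1 :|: A)).
  apply: mon; apply/subsetP => x; rewrite !inE.
  by case: (x \in S1); case: (x \in A); case: (x \in B).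
have n3 := nn (A :&: B).
lra.
Qed.

Lemma dist1 (R : realType) (X : Type) (x : X) : is_dist [:: ((1 : R), x)].
Proof.
split; last by rewrite big_cons big_nil addr0.
by move=> p /= [<-|[]] //=; exact: ler01.
Qed.

Lemma main (R : realType) (sf : nat -> nat) k n (WA VA VB : {set 'I_n})
  (f : {set 'I_n} -> R) :
  (0 < sf k)%N -> valid_instance k WA VA VB f ->
  protocol_wf (proto R sf) k WA VA VB f /\
  2 * k%:R * opt_val k VA VB f <=
    3 * (k + (sf k).-1)%:R * protocol_value (proto R sf) k WA VA VB f.
Proof.
move=> s0 [k0 [sVA [sVB [nn [mon sub]]]]].
set s := sf k in s0 *.
set fA := restrict WA f.
set m := amsg s k VA fA.
set T := bobout k VB m f.
have fAe : forall S : {set 'I_n}, S \subset VA -> fA S = f S.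
  move=> S SV; rewrite /fA /restrict; congr f; apply/setIidPl.
  exact: subset_trans SV sVA.
have inm : forall a x, a \in grid s k ->
    (x \in best1 VA fA a) || (x \in best2 VA fA a) -> x \in [set x in m].
  move=> a x ag hx; rewrite inE; apply/flatten_mapP; exists a => //.
  by rewrite mem_cat !mem_enum.
have mVA : [set x in m] \subset VA.
  apply/subsetP => x; rewrite inE => /flatten_mapP [a _].
  have [b1 _ _] := best1P VA fA a; have [b2 _ _] := best2P VA fA a.
  by rewrite mem_cat !mem_enum => /orP [] h; [apply: (subsetP b1) | apply: (subsetP b2)].
have [bT1 bT2 bT3] := boboutP k VB m f.
split.
  split; first exact: dist1.
  move=> pm /= [<-|[]] //=; split; first exact: dist1.
  move=> pS /= [<-|[]] //=; split => //.
  exact: subset_trans bT1 (setSU _ mVA).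
have -> : protocol_value (proto R sf) k WA VA VB f = f T.
  by rewrite /protocol_value /expect /= !big_cons !big_nil /= !mul1r !addr0.
rewrite /opt_val.
case: (@arg_maxP _ _ _ set0 (fun O : {set 'I_n} => (O \subset VA :|: VB) && (#|O| <= k)%N) f).
  by rewrite sub0set cards0.
move=> O /andP[OV Ok] Omax.
have optO : \big[Num.max/0]_(T0 : {set 'I_n} | (T0 \subset VA :|: VB) && (#|T0| <= k)%N) f T0 <= f O.
  elim/big_ind: _ => [|x y hx hy|T0 hT0].
  - exact: nn.
  - by rewrite ge_max hx hy.
  - by apply: Omax.
set A := O :&: VA. set B := O :&: VB.
have dis : A :&: B = set0.
  apply/setP => x; rewrite !inE.
  case xa: (x \in VA); case xb: (x \in VB); rewrite ?andbF ?andbT //=.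
  have := subsetP sVB x xb; rewrite inE (subsetP sVA x xa) /=.
  by [].
have eO : A :|: B = O.
  apply/setP => x; rewrite !inE -andb_orr.
  case xO: (x \in O) => //=.
  by have := subsetP OV x xO; rewrite inE.
have cAB : (#|A| + #|B| <= k)%N.
  by rewrite -cardsUI dis cards0 addn0 eO.
have ak : (#|A| <= k)%N by apply: leq_trans cAB; apply: leq_addr.
have [a' ag [aa' a's a'k]] := grid_cover s0 ak.
have [sS1 cS1 mx1] := best1P VA fA a'.
have [sS2 cS2 mx2] := best2P VA fA a'.
set S1 := best1 VA fA a' in sS1 cS1 mx1 mx2 inm.
set S2 := best2 VA fA a' in sS2 cS2 mx2 inm.
have h1 : f A <= f S1.
  rewrite -(fAe _ sS1) -(fAe A (subsetIr _ _)).
  by apply: mx1 => //; apply: subsetIr.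
have h2 : f (S1 :|: A) <= f (S1 :|: S2).
  have sA : A \subset VA by apply: subsetIr.
  rewrite -!fAe ?subUset ?sS1 ?sS2 ?sA //.
  exact: mx2.
have K := key nn mon sub B h1 h2.
rewrite eO in K.
have cand : forall S : {set 'I_n}, S \subset VA -> (#|S| <= a')%N ->
    (forall x, x \in S -> x \in [set x in m]) ->
    k%:R * f (S :|: B) <= (k + s.-1)%:R * f T.
  move=> S SV cS Sm.
  have cX : (#|S :|: B| <= k + s.-1)%N.
    apply: leq_trans (_ : #|S| + #|B| <= _)%N.
      by rewrite -cardsUI leq_addr.
    apply: leq_trans (leq_add cS (leqnn _)) _.
    apply: leq_trans (leq_add a's (leqnn _)) _.
    by rewrite addnAC leq_add2r.
  have [X' [sX' cX' hX']] := trim_to nn sub cX.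
  apply: le_trans hX' _; apply: ler_wpM2l => //.
  apply: bT3 => //.
  apply: subset_trans sX' _; rewrite subUset; apply/andP; split.
    by apply/subsetP => x /Sm xm; apply/setUP; left.
  by apply/subsetP => x; rewrite !inE => /andP[_ ->]; rewrite orbT.
have c1 : k%:R * f (S1 :|: B) <= (k + s.-1)%:R * f T.
  by apply: cand => // x hx; apply: (inm a' x ag); rewrite hx.
have c2 : k%:R * f (S2 :|: B) <= (k + s.-1)%:R * f T.
  by apply: cand => // x hx; apply: (inm a' x ag); rewrite hx orbT.
have kp : (0 : R) <= k%:R by [].
have Dp : (0 : R) <= (k + s.-1)%:R by [].
have yT := nn T.
have o1 : k%:R * \big[Num.max/0]_(T0 : {set 'I_n} | (T0 \subset VA :|: VB) && (#|T0| <= k)%N) f T0 <= k%:R * f O.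
  exact: ler_wpM2l.
nra.
Qed.

Lemma opt_ge0 (R : realType) k n (VA VB : {set 'I_n}) (f : {set 'I_n} -> R) :
  nonneg_sf f -> 0 <= opt_val k VA VB f.
Proof.
move=> nn; rewrite /opt_val; elim/big_ind: _ => [|x y hx hy|T0 _] //.
by rewrite le_max hx.
Qed.

Definition triv (R : realType) : protocol R :=
  Protocol (fun k n WA VA fA => [:: ((1 : R), [::])])
           (fun k n WA VB m f => [:: ((1 : R), set0)]).

From mathcomp Require Import all_classical all_reals.
From mathcomp Require Import exp.

Theorem theorem1 :
  (exists (C c : nat), forall (R : realType) (eps : R), 0 < eps ->
     exists P : protocol R,
       approx_protocol P (2 / 3 - eps) /\
       comm_bounded P (fun k => C%:R * (k%:R / eps) * (ln (k%:R / eps + 2)) ^+ c))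
  /\
  (exists C : nat, forall R : realType,
     exists P : protocol R,
       approx_protocol P (2 / 3) /\
       comm_bounded P (fun k => C%:R * (k%:R ^+ 2))).
Proof.
split.
  exists 6%N, 0%N => R eps eps0.
  case: (lerP eps 1) => e1.
    pose sf := fun k : nat => (Num.truncn (eps * k%:R)).+1.
    exists (proto R sf); split.
      move=> k n WA VA VB f hv.
      have [wf H] := main (ltn0Sn _ : (0 < sf k)%N) hv.
      split => //.
      have [k0 [_ [_ [nn _]]]] := hv.
      have o0 := opt_ge0 k VA VB nn.
      have v0 : 0 <= protocol_value (proto R sf) k WA VA VB f.
        by rewrite /protocol_value /expect /= !big_cons !big_nil /= !mul1r !addr0.
      move: H; rewrite /sf /=.
      set o := opt_val k VA VB f; set v := protocol_value _ _ _ _ _ _ in v0 *.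
      have hd : (Num.truncn (eps * k%:R))%:R <= eps * k%:R.
        by rewrite truncn_le; apply: mulr_ge0; [apply: ltW|].
      have K1 : (1 : R) <= k%:R by rewrite ler1n.
      rewrite natrD.
      set D := (Num.truncn (eps * k%:R))%:R in hd *.
      set K := (k%:R : R) in hd K1 *.
      have D0 : 0 <= D by rewrite /D.
      move=> H.
      have hneg : 2 * D - 3 * eps * K - 3 * eps * D <= 0 by nra.
      have KD : 0 < 3 * (K + D) by lra.
      rewrite -(ler_pM2l KD).
      have e : 3 * (K + D) * ((2 / 3 - eps) * o) = 2 * K * o + (2 * D - 3 * eps * K - 3 * eps * D) * o.
        by field.
      rewrite e.
      have := mulr_le0_ge0 hneg o0.
      rewrite -/o; lra.
    move=> k n WA VA VB f hv pm /= [<-|[]] //=.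
    rewrite expr0 mulr1.
    have hs := size_amsg (sf k) k VA (Defs.restrict WA f).
    apply: le_trans (_ : (2 * k * (k %/ sf k).+2)%:R <= _).
      by rewrite ler_nat.
    have [k0 _] := hv.
    have q1 : ((k %/ sf k) * sf k <= k)%N by apply: leq_trunc_div.
    have hs2 : eps * k%:R < (sf k)%:R by rewrite /sf; apply: truncnS_gt.
    have q1r : (k %/ sf k)%:R * (sf k)%:R <= k%:R :> R by rewrite -natrM ler_nat.
    clear q1; rename q1r into q1.
    rewrite !natrM -!natr1 /=.
    set q := ((k %/ sf k)%:R : R) in q1 *.
    set S := ((sf k)%:R : R) in q1 hs2.
    set K := (k%:R : R) in q1 hs2 *.
    have K0 : 0 < K by rewrite ltr0n.
    have q0 : 0 <= q by [].
    have qe : q * eps <= 1.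
      have : q * (eps * K) <= K by apply: le_trans q1; apply: ler_wpM2l => //; apply: ltW.
      rewrite mulrA => h.
      by rewrite -(ler_pM2r K0) mul1r.
    set z := K / eps.
    have Kz : K = z * eps by rewrite /z divfK // gt_eqF.
    have z0 : 0 <= z by rewrite /z divr_ge0 // ltW.
    rewrite Kz.
    nra.
  exists (triv R); split.
    move=> k n WA VA VB f hv.
    have [k0 [_ [_ [nn _]]]] := hv.
    split.
      split; first exact: dist1.
      move=> pm _; split; first exact: dist1.
      by move=> pS /= [<-|[]] //=; rewrite finset.sub0set cards0.
    rewrite /protocol_value /expect /= !big_cons !big_nil /= !mul1r !addr0.
    have o0 := opt_ge0 k VA VB nn.
    have := nn finset.set0.
    nra.
  move=> k n WA VA VB f hv pm /= [<-|[]] //=.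
  rewrite expr0 mulr1 mulr_ge0 //; apply: divr_ge0 => //; apply: ltW.
  exact: eps0.
exists 6%N => R.
exists (proto R (fun _ => 1%N)); split.
  move=> k n WA VA VB f hv.
  have [wf H] := main (ltn0Sn _ : (0 < (fun _ : nat => 1%N) k)%N) hv.
  split => //.
  have [k0 [_ [_ [nn _]]]] := hv.
  move: H; rewrite addn0 /=.
  have K0 : (0 : R) < k%:R by rewrite ltr0n.
  set K := (k%:R : R) in K0 *.
  move=> H.
  rewrite -(ler_pM2l (_ : 0 < 3 * K)); last by lra.
  nra.
move=> k n WA VA VB f hv pm /= [<-|[]] //=.
have hs := size_amsg 1 k VA (Defs.restrict WA f).
have [k0 _] := hv.
rewrite -natrX -natrM ler_nat.
apply: leq_trans hs _.
rewrite divn1; nia.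
Qed.
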